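(* Let $(L,\alpha_L)$ be a perfect Hom-Leibniz $n$-algebra with $\alpha_L$ injective such that both $(L,\alpha_L)$ and $(\mathfrak{uce}(L),\alpha_{\mathfrak{uce}(L)})$ satisfy condition (C). Then there is an isomorphism (induced by $u_L$) $$\frac{\alpha_L(L)}{Z(\alpha_L(L))}\cong\frac{\alpha_{\mathfrak{uce}(L)}(\mathfrak{uce}(L))}{Z(\alpha_{\mathfrak{uce}(L)}(\mathfrak{uce}(L)))}.$$
   Context: Fix a field $\mathbb K$ and $n\ge2$. A (multiplicative) Hom-Leibniz $n$-algebra is a $\mathbb K$-vector space $L$ with an $n$-linear bracket and a linear map $\alpha_L$ preserving the bracket, satisfying $[[x_1,\dots,x_n],\alpha_L(y_1),\dots,\alpha_L(y_{n-1})]=\sum_{i=1}^n[\alpha_L(x_1),\dots,[x_i,y_1,\dots,y_{n-1}],\dots,\alpha_L(x_n)]$. Perfect: $L=[L,\dots,L]$. For a subspace $S$ closed under the bracket, $Z(S)$ is the set of $x\in S$ such that every bracket with $x$ in some position and all other entries in $S$ is $0$. Condition (C) for $(K,\alpha_K)$: $[\alpha_K(k),\alpha_K(k),\alpha_K(k_3),\dots,\alpha_K(k_n)]=0$ for all $k,k_3,\dots,k_n\in K$. Define $\delta_2:L^{\otimes(2n-1)}\to L^{\otimes n}$, $\delta_2(x_1\otimes\dots\otimes x_n\otimes y_1\otimes\dots\otimes y_{n-1})=[x_1,\dots,x_n]\otimes\alpha_L(y_1)\otimes\dots\otimes\alpha_L(y_{n-1})-\sum_{i=1}^n\alpha_L(x_1)\otimes\dots\otimes[x_i,y_1,\dots,y_{n-1}]\otimes\dots\otimes\alpha_L(x_n)$.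 $\mathfrak{uce}(L)=L^{\otimes n}/\operatorname{im}\delta_2$, classes written $\{x_1,\dots,x_n\}$, with bracket $[\{x_{1,1},\dots,x_{n,1}\},\dots,\{x_{1,n},\dots,x_{n,n}\}]=\{[x_{1,1},\dots,x_{n,1}],\dots,[x_{1,n},\dots,x_{n,n}]\}$ and $\alpha_{\mathfrak{uce}(L)}\{x_1,\dots,x_n\}=\{\alpha_L(x_1),\dots,\alpha_L(x_n)\}$; $u_L:\mathfrak{uce}(L)\to L$, $u_L\{x_1,\dots,x_n\}=[x_1,\dots,x_n]$, is the universal central extension of the perfect $L$. *)

(* Defs.v *)
From HB Require Import structures.
From mathcomp Require Import all_boot all_order all_algebra.
Set Implicit Arguments. Unset Strict Implicit. Unset Printing Implicit Defensive.
Import Order.TTheory GRing.Theory.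
Local Open Scope ring_scope.

Section HomLeibniz.
Variables (K : fieldType) (n : nat).

Definition upd (V : Type) (x : {ffun 'I_n -> V}) (i : 'I_n) (y : V)
  : {ffun 'I_n -> V} := [ffun j => if j == i then y else x j].

Definition set_first (V : Type) (x : {ffun 'I_n -> V}) (y : V)
  : {ffun 'I_n -> V} := [ffun j : 'I_n => if val j == 0%N then y else x j].

Definition fmap (V W : Type) (f : V -> W) (x : {ffun 'I_n -> V})
  : {ffun 'I_n -> W} := [ffun j => f (x j)].

Definition is_linear (V W : lmodType K) (f : V -> W) :=
  forall (a : K) (x y : V), f (a *: x + y) = a *: f x + f y.

Definition multilinear (V W : lmodType K) (f : {ffun 'I_n -> V} -> W) :=
  forall (x : {ffun 'I_n -> V}) (i : 'I_n) (a : K) (y z : V),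
    f (upd x i (a *: y + z)) = a *: f (upd x i y) + f (upd x i z).

(* [[x_1..x_n], a(y_1), .., a(y_{n-1})]
     = sum_i [a(x_1), .., [x_i, y_1, .., y_{n-1}], .., a(x_n)]
   (the entries y_1..y_{n-1} are the entries 1..n-1 of y; entry 0 of y is
   irrelevant) *)
Definition hom_leibniz_identity (V : lmodType K)
    (br : {ffun 'I_n -> V} -> V) (alpha : V -> V) :=
  forall x y : {ffun 'I_n -> V},
    br (set_first (fmap alpha y) (br x))
    = \sum_(i < n) br (upd (fmap alpha x) i (br (set_first y (x i)))).

Definition is_HomLeibniz (V : lmodType K)
    (br : {ffun 'I_n -> V} -> V) (alpha : V -> V) :=
  [/\ multilinear br, is_linear alpha,
      (forall x, alpha (br x) = br (fmap alpha x))
    & hom_leibniz_identity br alpha].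

Definition perfect (V : lmodType K) (br : {ffun 'I_n -> V} -> V) :=
  forall z : V, exists s : seq (K * {ffun 'I_n -> V}),
    z = \sum_(p <- s) p.1 *: br p.2.

Definition condC (V : lmodType K) (br : {ffun 'I_n -> V} -> V)
    (alpha : V -> V) :=
  forall (k : V) (x : {ffun 'I_n -> V}),
    br [ffun j : 'I_n => if (val j <= 1)%N then alpha k else alpha (x j)] = 0.

Definition in_image (V : Type) (f : V -> V) (z : V) := exists w, z = f w.

Definition center (V : lmodType K) (S : V -> Prop)
    (br : {ffun 'I_n -> V} -> V) (z : V) :=
  S z /\ forall (i : 'I_n) (y : {ffun 'I_n -> V}),
    (forall j, S (y j)) -> br (upd y i z) = 0.

(* (U, g) is L^{(x)n} / im delta_2, given by its universal property:
   g x = {x_1, ..., x_n}; g is n-linear, kills the image of delta_2 on pure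
   tensors, and every n-linear map killing these factors uniquely through a
   linear map on U. *)
Definition kills_delta2 (V W : lmodType K) (br : {ffun 'I_n -> V} -> V)
    (alpha : V -> V) (f : {ffun 'I_n -> V} -> W) :=
  forall x y : {ffun 'I_n -> V},
    f (set_first (fmap alpha y) (br x))
    = \sum_(i < n) f (upd (fmap alpha x) i (br (set_first y (x i)))).

Definition is_uce_space (L U : lmodType K) (br : {ffun 'I_n -> L} -> L)
    (alpha : L -> L) (g : {ffun 'I_n -> L} -> U) :=
  [/\ multilinear g, kills_delta2 br alpha g
    & forall (W : lmodType K) (f : {ffun 'I_n -> L} -> W),
        multilinear f -> kills_delta2 br alpha f ->
        (exists h : U -> W, is_linear h /\ forall x, h (g x) = f x) /\
        (forall h1 h2 : U -> W, is_linear h1 -> is_linear h2 ->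
           (forall x, h1 (g x) = f x) -> (forall x, h2 (g x) = f x) ->
           forall z, h1 z = h2 z)].

Definition is_uce (L U : lmodType K) (br : {ffun 'I_n -> L} -> L)
    (alpha : L -> L) (g : {ffun 'I_n -> L} -> U)
    (brU : {ffun 'I_n -> U} -> U) (alphaU : U -> U) (u : U -> L) :=
  [/\ @is_uce_space L U br alpha g,
      multilinear brU
      /\ (forall X : {ffun 'I_n -> {ffun 'I_n -> L}},
            brU (fmap g X) = g (fmap br X)),
      is_linear alphaU /\ (forall x, alphaU (g x) = g (fmap alpha x))
    & is_linear u /\ (forall x, u (g x) = br x)].

End HomLeibniz.

(* Main.v *)
Require Import Defs.
From HB Require Import structures.
From mathcomp Require Import all_boot all_order all_algebra.
Import GRing.Theory.
Local Open Scope ring_scope.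
Set Implicit Arguments. Unset Strict Implicit.

Section Aux.
Variables (K : fieldType) (n : nat).

Lemma lin0 (V W : lmodType K) (h : V -> W) : is_linear h -> h 0 = 0.
Proof.
move=> H; have := H 1 0 0; rewrite !scale1r addr0 => E.
by apply: (@addrI _ (h 0)); rewrite addr0 -E.
Qed.

Lemma linD (V W : lmodType K) (h : V -> W) : is_linear h ->
  forall x y, h (x + y) = h x + h y.
Proof. by move=> H x y; have := H 1 x y; rewrite !scale1r. Qed.

Lemma linZ (V W : lmodType K) (h : V -> W) : is_linear h ->
  forall a x, h (a *: x) = a *: h x.
Proof. by move=> H a x; have := H a x 0; rewrite !addr0 (lin0 H) addr0. Qed.

Lemma linS (V W : lmodType K) (h : V -> W) (I : Type) (r : seq I) (F : I -> V) :
  is_linear h -> h (\sum_(i <- r) F i) = \sum_(i <- r) h (F i).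
Proof. by move=> H; apply: (big_morph h (linD H) (lin0 H)). Qed.

Lemma fmap_upd (V W : Type) (f : V -> W) (x : {ffun 'I_n -> V}) i y :
  fmap f (upd x i y) = upd (fmap f x) i (f y).
Proof. by apply/ffunP=> j; rewrite !ffunE; case: ifP. Qed.

Lemma upd_id (V : Type) (x : {ffun 'I_n -> V}) i : upd x i (x i) = x.
Proof. by apply/ffunP=> j; rewrite !ffunE; case: eqP => // ->. Qed.

Lemma upd_upd_C (V : Type) (x : {ffun 'I_n -> V}) i j a b : i != j ->
  upd (upd x i a) j b = upd (upd x j b) i a.
Proof.
move=> ij; apply/ffunP=> k; rewrite !ffunE.
case: (eqVneq k j) => [->|kj]; first by rewrite eq_sym (negbTE ij).
by case: (eqVneq k i).
Qed.

Lemma upd_upd (V : Type) (x : {ffun 'I_n -> V}) i a b :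
  upd (upd x i a) i b = upd x i b.
Proof. by apply/ffunP=> k; rewrite !ffunE; case: (k == i). Qed.

Lemma upd_at (V : Type) (x : {ffun 'I_n -> V}) i a : upd x i a i = a.
Proof. by rewrite ffunE eqxx. Qed.

Lemma ml_lin (V W : lmodType K) (f : {ffun 'I_n -> V} -> W) x i :
  multilinear f -> is_linear (fun z => f (upd x i z)).
Proof. by move=> H a y z; apply: H. Qed.

Lemma ml_zero (V W : lmodType K) (f : {ffun 'I_n -> V} -> W) x i :
  multilinear f -> f (upd x i 0) = 0.
Proof. by move=> H; apply: (lin0 (ml_lin x i H)). Qed.

Lemma ml_zero' (V W : lmodType K) (f : {ffun 'I_n -> V} -> W) (x : {ffun 'I_n -> V}) i :
  multilinear f -> x i = 0 -> f x = 0.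
Proof. by move=> H xi; rewrite -(upd_id x i) xi ml_zero. Qed.

Section Uce.
Variables (L U : lmodType K) (br : {ffun 'I_n -> L} -> L) (alpha : L -> L)
  (g : {ffun 'I_n -> L} -> U).
Hypothesis Hg : is_uce_space br alpha g.

Lemma dense (W : lmodType K) (h1 h2 : U -> W) : is_linear h1 -> is_linear h2 ->
  (forall x, h1 (g x) = h2 (g x)) -> forall z, h1 z = h2 z.
Proof.
case: Hg => gml gk gu l1 l2 E.
have mf : multilinear (fun x => h1 (g x)).
  by move=> x i a y z; rewrite gml l1.
have kf : kills_delta2 br alpha (fun x => h1 (g x)).
  by move=> x y /=; rewrite gk linS.
have [_ uq] := gu W _ mf kf.
by apply: uq => // x; rewrite E.
Qed.

Lemma mdense (W : lmodType K) (F1 F2 : {ffun 'I_n -> U} -> W) :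
  multilinear F1 -> multilinear F2 ->
  (forall X, F1 (fmap g X) = F2 (fmap g X)) -> forall Z, F1 Z = F2 Z.
Proof.
move=> m1 m2 E.
suff P : forall k, (k <= n)%N -> forall (Z : {ffun 'I_n -> U}) (Y : {ffun 'I_n -> {ffun 'I_n -> L}}),
    (forall j : 'I_n, (k <= j)%N -> Z j = g (Y j)) -> F1 Z = F2 Z.
  by move=> Z; apply: (P n (leqnn n) Z [ffun=> [ffun=> 0]]) => j; rewrite leqNgt ltn_ord.
elim=> [_ Z Y HZ|k IH kn Z Y HZ].
  have -> : Z = fmap g Y by apply/ffunP=> j; rewrite ffunE HZ.
  exact: E.
pose i := Ordinal kn.
rewrite -(upd_id Z i).
apply: (dense (ml_lin Z i m1) (ml_lin Z i m2)) => w.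
apply: (IH (ltnW kn) _ (upd Y i w)) => j kj.
rewrite !ffunE; case: eqP => // /eqP ji.
apply: HZ; rewrite ltn_neqAle kj andbT.
by apply: contra ji => /eqP kj'; apply/eqP/val_inj; rewrite /= kj'.
Qed.

End Uce.
End Aux.

Section Main.
Variables (K : fieldType) (n : nat) (L U : lmodType K)
    (br : {ffun 'I_n -> L} -> L) (alpha : L -> L)
    (g : {ffun 'I_n -> L} -> U) (brU : {ffun 'I_n -> U} -> U)
    (alphaU : U -> U) (u : U -> L).
Hypotheses (n2 : (2 <= n)%N) (HL : is_HomLeibniz br alpha) (Hp : perfect br)
  (Hinj : injective alpha) (Hu : is_uce br alpha g brU alphaU u)
  (HcU : condC brU alphaU).

Let brml : multilinear br. Proof. by case: HL. Qed.
Let alin : is_linear alpha. Proof. by case: HL. Qed.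
Let ahom : forall x, alpha (br x) = br (fmap alpha x). Proof. by case: HL. Qed.
Let Hg : is_uce_space br alpha g. Proof. by case: Hu. Qed.
Let gml : multilinear g. Proof. by case: Hg. Qed.
Let gk : kills_delta2 br alpha g. Proof. by case: Hg. Qed.
Let brUml : multilinear brU. Proof. by case: Hu => _ []. Qed.
Let brUg : forall X, brU (fmap g X) = g (fmap br X). Proof. by case: Hu => _ []. Qed.
Let aUlin : is_linear alphaU. Proof. by case: Hu => _ _ []. Qed.
Let aUg : forall x, alphaU (g x) = g (fmap alpha x). Proof. by case: Hu => _ _ []. Qed.
Let ulin : is_linear u. Proof. by case: Hu => _ _ _ []. Qed.
Let ug : forall x, u (g x) = br x. Proof. by case: Hu => _ _ _ []. Qed.

Lemma lin_comp (V1 V2 V3 : lmodType K) (f : V1 -> V2) (h : V2 -> V3) :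
  is_linear f -> is_linear h -> is_linear (fun x => h (f x)).
Proof. by move=> lf lh a x y; rewrite lf lh. Qed.

Lemma brU_eq Z : brU Z = g (fmap u Z).
Proof.
apply: (mdense Hg (F2 := fun Z => g (fmap u Z)) brUml) => [x i a y z|X] /=.
  by rewrite !fmap_upd ulin; apply: gml.
rewrite brUg; congr g; apply/ffunP=> j; by rewrite !ffunE ug.
Qed.

Lemma u_surj l : exists m, l = u m.
Proof.
have [s ->] := Hp l.
exists (\sum_(p <- s) p.1 *: g p.2).
rewrite (linS _ _ ulin); apply: eq_bigr => p _.
by rewrite (linZ ulin) ug.
Qed.

Lemma u_alphaU x : u (alphaU x) = alpha (u x).
Proof.
apply: (dense Hg (lin_comp aUlin ulin) (lin_comp ulin alin)) => y.
by rewrite aUg !ug ahom.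
Qed.

Lemma u_brU X : u (brU X) = br (fmap u X).
Proof. by rewrite brU_eq ug. Qed.

Lemma central_L v :
  center (in_image alpha) br (alpha v) ->
  forall z k, br (upd z k v) = 0.
Proof.
case=> _ Hc z k; apply: Hinj.
rewrite ahom fmap_upd (lin0 alin); apply: Hc => j.
by rewrite ffunE; exists (z j).
Qed.

Let n0 : (0 < n)%N. Proof. exact: leq_trans n2. Qed.
Let i0 : 'I_n := Ordinal n0.
Let i1 : 'I_n := Ordinal n2.

Lemma upd0 (V : Type) (X : {ffun 'I_n -> V}) y : upd X i0 y = set_first X y.
Proof. by apply/ffunP=> j; rewrite !ffunE. Qed.

Lemma upd_same (V : Type) (X : {ffun 'I_n -> V}) i w : X i = w -> upd X i w = X.
Proof. by move=> <-; rewrite upd_id. Qed.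

Lemma g_vanish_pos (l : {ffun 'I_n -> L}) i : val i != 0%N ->
  (forall z k, br (upd z k (l i)) = 0) -> g (fmap alpha l) = 0.
Proof.
move=> ni Hc.
have [s Es] := Hp (l i0).
rewrite -(upd_id l i0) Es fmap_upd (linS _ _ alin).
rewrite (linS _ _ (ml_lin (fmap alpha l) i0 gml)).
apply: big1 => p _.
rewrite (linZ alin) (linZ (ml_lin (fmap alpha l) i0 gml)) ahom upd0.
rewrite gk big1 ?scaler0 // => k _.
apply: (@ml_zero' _ _ _ _ g (upd (fmap alpha (fmap alpha p.2)) k (br (set_first l (fmap alpha p.2 k)))) k gml); rewrite upd_at.
rewrite -(upd_same (X := set_first l _) (i := i) (w := l i)) ?Hc //.
by rewrite ffunE (negbTE ni).
Qed.

Lemma lift_tuple (y : {ffun 'I_n -> L}) : exists Y : {ffun 'I_n -> U}, y = fmap u Y.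
Proof.
have /fin_all_exists [M HM] : forall j, exists m, y j = u m by move=> j; apply: u_surj.
by exists [ffun j => M j]; apply/ffunP=> j; rewrite !ffunE HM.
Qed.

Lemma gC k (b : {ffun 'I_n -> L}) :
  g [ffun j : 'I_n => if (val j <= 1)%N then alpha k else alpha (b j)] = 0.
Proof.
have [m ->] := u_surj k; have [B ->] := lift_tuple b.
have := HcU m B; rewrite brU_eq => <-; congr g.
by apply/ffunP=> j; rewrite !ffunE; case: ifP; rewrite u_alphaU // ffunE.
Qed.

Lemma g_vanish0 (l : {ffun 'I_n -> L}) :
  (forall z k, br (upd z k (l i0)) = 0) -> g (fmap alpha l) = 0.
Proof.
move=> Hc.
pose X := fmap alpha l.
pose Q p q := g (upd (upd X i1 q) i0 p).
have i10 : i1 != i0 by [].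
have QD1 p p' q : Q (p + p') q = Q p q + Q p' q.
  by rewrite /Q (linD (ml_lin _ i0 gml)).
have QD2 p q q' : Q p (q + q') = Q p q + Q p q'.
  by rewrite /Q !(upd_upd_C _ _ _ i10) (linD (ml_lin _ i1 gml)).
have Qkk k : Q (alpha k) (alpha k) = 0.
  rewrite /Q -(gC k l); congr g; apply/ffunP=> j; rewrite !ffunE.
  by case: j => [[|[|j]] Hj].
have Qab : Q (alpha (l i0)) (alpha (l i1)) = g (fmap alpha l).
  by rewrite /Q /X !upd_same // ffunE.
have Qba : Q (alpha (l i1)) (alpha (l i0)) = 0.
  rewrite /Q /X -!fmap_upd.
  apply: (g_vanish_pos (i := i1)) => //.
  by rewrite ffunE (negbTE i10) upd_at.
have := Qkk (l i0 + l i1).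
rewrite (linD alin) QD1 !QD2 !Qkk Qba Qab add0r addr0 addr0.
by [].
Qed.

Lemma g_vanish (l : {ffun 'I_n -> L}) i :
  (forall z k, br (upd z k (l i)) = 0) -> g (fmap alpha l) = 0.
Proof.
case: (eqVneq (val i) 0%N) => [e|ne].
  have -> : i = i0 by apply: val_inj.
  exact: g_vanish0.
exact: g_vanish_pos.
Qed.

Lemma main_res :
  [/\ (forall x, in_image alphaU x -> in_image alpha (u x)),
      (forall x, in_image alphaU x ->
         (center (in_image alpha) br (u x) <->
          center (in_image alphaU) brU x)),
      (forall z, in_image alpha z ->
         exists2 x, in_image alphaU x &
           center (in_image alpha) br (z - u x)),
      is_linear u /\ (forall X, u (brU X) = br (fmap u X))
    & (forall x, u (alphaU x) = alpha (u x))].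
Proof.
split.
- by move=> x [w ->]; exists (u w); rewrite u_alphaU.
- move=> x [w ->]; split.
    move=> Hc; split; first by exists w.
    move=> i Y HY.
    have /fin_all_exists [M HM] : forall j, exists m, Y j = alphaU m by [].
    pose l := [ffun j => u (M j)].
    have -> : Y = fmap alphaU [ffun j => M j].
      by apply/ffunP=> j; rewrite !ffunE HM.
    rewrite brU_eq -fmap_upd.
    have -> : fmap u (fmap alphaU (upd [ffun j => M j] i w))
              = fmap alpha (upd l i (u w)).
      by apply/ffunP=> j; rewrite !ffunE u_alphaU; case: ifP; rewrite ?ffunE.
    apply: (g_vanish (i := i)); rewrite upd_at.
    by apply: central_L; rewrite -u_alphaU.
  case=> _ Hc; split; first by exists (u w); rewrite u_alphaU.
  move=> i y Hy.
  have /fin_all_exists [M HM] : forall j, exists m, y j = u (alphaU m).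
    move=> j; have [w' ->] := Hy j; have [m ->] := u_surj w'.
    by exists m; rewrite u_alphaU.
  have -> : y = fmap u [ffun j => alphaU (M j)].
    by apply/ffunP=> j; rewrite !ffunE HM.
  rewrite -fmap_upd -u_brU Hc ?(lin0 ulin) // => j.
  by rewrite ffunE; exists (M j).
- move=> z [w ->]; have [m ->] := u_surj w.
  exists (alphaU m); first by exists m.
  rewrite u_alphaU subrr; split; first by exists 0; rewrite (lin0 alin).
  by move=> i y _; apply: ml_zero brml.
- by split; [exact: ulin | exact: u_brU].
- exact: u_alphaU.
Qed.

End Main.
Theorem theorem5p7 (K : fieldType) (n : nat) (L U : lmodType K)
    (br : {ffun 'I_n -> L} -> L) (alpha : L -> L)
    (g : {ffun 'I_n -> L} -> U) (brU : {ffun 'I_n -> U} -> U)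
    (alphaU : U -> U) (u : U -> L) :
  (2 <= n)%N ->
  is_HomLeibniz br alpha ->
  perfect br ->
  injective alpha ->
  is_uce br alpha g brU alphaU u ->
  condC br alpha ->
  condC brU alphaU ->
  (* the map x + Z(alphaU(U)) |-> u x + Z(alpha(L)) is a well-defined
     isomorphism alphaU(U)/Z(alphaU(U)) -> alpha(L)/Z(alpha(L)) *)
  [/\ (forall x, in_image alphaU x -> in_image alpha (u x)),
      (forall x, in_image alphaU x ->
         (center (in_image alpha) br (u x) <->
          center (in_image alphaU) brU x)),
      (forall z, in_image alpha z ->
         exists2 x, in_image alphaU x &
           center (in_image alpha) br (z - u x)),
      is_linear u /\ (forall X, u (brU X) = br (fmap u X))
    & (forall x, u (alphaU x) = alpha (u x))].
Proof.
move=> n2 HL Hp Hinj Hu _ HcU.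
exact: (main_res n2 HL Hp Hinj Hu HcU).
Qed.
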